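(* Let $X$ be a separated metric compact Hausdorff space. Consider the assignments $\mathrm{Quot}(X)\to\mathrm{Subm}(X)$, $(f\colon X\twoheadrightarrow Y)\mapsto\kappa_f$, and $\mathrm{Subm}(X)\to\mathrm{Quot}(X)$, $\gamma\mapsto(p_\gamma\colon X\twoheadrightarrow X/{\sim_\gamma})$. These form a dual equivalence between the preordered class $\mathrm{Quot}(X)$ and the poset $\mathrm{Subm}(X)$: both are order-reversing, for all $f\in\mathrm{Quot}(X)$ and $\gamma\in\mathrm{Subm}(X)$ one has $\kappa_f\le\gamma$ iff $p_\gamma\le f$, $\kappa_{p_\gamma}=\gamma$, and $p_{\kappa_f}$ is isomorphic to $f$ (i.e. $p_{\kappa_f}\le f\le p_{\kappa_f}$). Consequently the poset $\tilde{\mathbf{Q}}(X)$ of quotient objects of $X$ is dually isomorphic to $\mathrm{Subm}(X)$.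
   Context: A metric on a set $X$ is a map $d\colon X\times X\to[0,\infty]$ with $d(x,x)=0$ and $d(x,z)\le d(x,y)+d(y,z)$ (not necessarily symmetric, $\infty$ allowed); separated means $d(x,y)=0=d(y,x)$ implies $x=y$. The upper topology on $[0,\infty]$ has as nonempty proper open sets the sets $]u,\infty]$. A separated metric compact Hausdorff space is a compact Hausdorff space with a separated metric continuous $X\times X\to[0,\infty]$ for the upper topology; $\mathbf{MetCH_{sep}}$ is the category of these with continuous non-expansive maps. $\mathrm{Quot}(X)$ is the class of surjective morphisms of $\mathbf{MetCH_{sep}}$ with domain $X$, preordered by $f\le g$ iff there is a morphism $h$ with $h\circ f=g$; $\tilde{\mathbf{Q}}(X)$ is the poset obtained by identifying $f,g$ with $f\le g\le f$. For $f\colon X\to Y$, the kernel metric is $\kappa_f(x_1,x_2)=d_Y(f(x_1),f(x_2))$. $\mathrm{Subm}(X)$ is the set of continuous submetrics on $X$: (not necessarily separated) metrics $\gamma$ on $X$ continuous $X\times X\to[0,\infty]$ for the upper topology with $\gamma\le d$ pointwise, ordered pointwise. For $\gamma\in\mathrm{Subm}(X)$, $x\sim_\gamma y$ iff $\gamma(x,y)=\gamma(y,x)=0$; $X/{\sim_\gamma}$ carries the quotient topology and the metric $([x],[y])\mapsto\gamma(x,y)$, and $p_\gamma\colon X\to X/{\sim_\gamma}$ is the projection, a surjective morphism of $\mathbf{MetCH_{sep}}$. *)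

(* Defs.v *)
From HB Require Import structures.
From mathcomp Require Import all_boot all_order all_algebra.
From mathcomp Require Import all_classical all_reals all_analysis.
Set Implicit Arguments.
Unset Strict Implicit.
Unset Printing Implicit Defensive.
Import Order.TTheory GRing.Theory Num.Theory.

Local Open Scope classical_set_scope.
Local Open Scope ereal_scope.

Section MetCH.
Variable R : realType.

Definition emetric (T : Type) (d : T -> T -> \bar R) : Prop :=
  [/\ forall x y, 0 <= d x y,
      forall x, d x x = 0
    & forall x y z, d x z <= d x y + d y z].

Definition separated (T : Type) (d : T -> T -> \bar R) : Prop :=
  forall x y, d x y = 0 -> d y x = 0 -> x = y.

(* continuity of d : T * T -> [0,+oo] for the upper topology, whose
   nonempty proper open sets are ]u, +oo] (0 <= u < +oo); u = +oo gives the
   empty set, and the whole space has preimage setT. *)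
Definition upper_continuous (T : topologicalType) (d : T -> T -> \bar R) : Prop :=
  forall u : \bar R, 0 <= u -> open [set p : T * T | u < d p.1 p.2].

Record metCH_sep (T : topologicalType) (d : T -> T -> \bar R) : Prop := MetCHSep {
  mc_compact : compact [set: T];
  mc_hausdorff : hausdorff_space T;
  mc_metric : emetric d;
  mc_separated : separated d;
  mc_cont : upper_continuous d }.

Definition morphism (T U : topologicalType) (dT : T -> T -> \bar R)
  (dU : U -> U -> \bar R) (f : T -> U) : Prop :=
  continuous f /\ forall x y, dU (f x) (f y) <= dT x y.

Record is_quot (X Y : topologicalType) (dX : X -> X -> \bar R)
  (dY : Y -> Y -> \bar R) (f : X -> Y) : Prop := IsQuot {
  q_space : metCH_sep dY;
  q_morphism : morphism dX dY f;
  q_surjective : forall y, exists x, f x = y }.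

Definition quot_le (X Y Z : topologicalType) (dY : Y -> Y -> \bar R)
  (dZ : Z -> Z -> \bar R) (f : X -> Y) (g : X -> Z) : Prop :=
  exists h : Y -> Z, morphism dY dZ h /\ h \o f = g.

Definition kernel_metric (X Y : Type) (dY : Y -> Y -> \bar R) (f : X -> Y) :
  X -> X -> \bar R := fun x1 x2 => dY (f x1) (f x2).

Record is_subm (X : topologicalType) (dX : X -> X -> \bar R)
  (g : X -> X -> \bar R) : Prop := IsSubm {
  sm_metric : emetric g;
  sm_cont : upper_continuous g;
  sm_le : forall x y, g x y <= dX x y }.

Definition subm_le (X : Type) (g1 g2 : X -> X -> \bar R) : Prop :=
  forall x y, g1 x y <= g2 x y.

Lemma kernel_emetric (X Y : Type) (dY : Y -> Y -> \bar R) (f : X -> Y) :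
  emetric dY -> emetric (kernel_metric dY f).
Proof. by case=> h0 h1 h2; split=> *; rewrite /kernel_metric. Qed.

Definition subm_rel (X : Type) (g : X -> X -> \bar R) : rel X :=
  fun x y => `[< g x y = 0 /\ g y x = 0 >].

Lemma subm_rel_equiv (X : Type) (g : X -> X -> \bar R) (hg : emetric g) :
  equiv_class_of (subm_rel g).
Proof.
case: hg => h0 h1 h2; split.
- by move=> x; apply/asboolP; rewrite h1.
- by move=> x y; apply/asboolP/asboolP => -[].
- move=> y x z /asboolP [xy yx] /asboolP [yz zy]; apply/asboolP; split.
  + apply/eqP; rewrite eq_le h0 andbT; have := h2 x y z.
    by rewrite xy yz adde0.
  + apply/eqP; rewrite eq_le h0 andbT; have := h2 z y x.
    by rewrite zy yx adde0.
Qed.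

Definition subm_equiv (X : Type) (g : X -> X -> \bar R) (hg : emetric g) :
  equiv_rel X := EquivRelPack (subm_rel_equiv hg).

Local Open Scope quotient_scope.

Definition quot_space (X : topologicalType) (g : X -> X -> \bar R)
  (hg : emetric g) : topologicalType :=
  quotient_topology {eq_quot (subm_equiv hg)}.

Definition quot_proj (X : topologicalType) (g : X -> X -> \bar R)
  (hg : emetric g) : X -> quot_space hg :=
  \pi_(quotient_topology {eq_quot (subm_equiv hg)}).

Definition quot_metric (X : topologicalType) (g : X -> X -> \bar R)
  (hg : emetric g) : quot_space hg -> quot_space hg -> \bar R :=
  fun a b => g (repr (a : quotient_topology {eq_quot (subm_equiv hg)}))
               (repr (b : quotient_topology {eq_quot (subm_equiv hg)})).

End MetCH.

Arguments quot_metric {R X g} hg.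
Arguments quot_proj {R X g} hg.
Arguments quot_space {R X g} hg.
Arguments kernel_emetric {R X Y dY} f.

(* Main.v *)
Require Import Defs.
From HB Require Import structures.
From mathcomp Require Import all_boot all_order all_algebra.
From mathcomp Require Import all_classical all_reals all_analysis.
Import Order.TTheory GRing.Theory Num.Theory.
Local Open Scope classical_set_scope.
Local Open Scope ereal_scope.
Local Open Scope quotient_scope.
Unset Strict Implicit.
Unset Printing Implicit Defensive.

Set Implicit Arguments.

Section Aux.
Variable R : realType.

Lemma uc_pos (T : topologicalType) (d : T -> T -> \bar R) a b :
  upper_continuous d -> 0 < d a b ->
  exists P Q, [/\ nbhs a P, nbhs b Q & forall z w, P z -> Q w -> 0 < d z w].
Proof.
move=> uc pos.
have := uc 0 (lexx 0); rewrite openE => /(_ (a,b) pos) [[P Q] /= [nP nQ] sub].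
exists P, Q; split => // z w Pz Qw; exact: (sub (z,w) (conj Pz Qw)).
Qed.

Lemma hausdorff_of (T : topologicalType) (d : T -> T -> \bar R) :
  emetric d -> Defs.separated d -> upper_continuous d -> hausdorff_space T.
Proof.
move=> [d0 dd _] sep uc p q cl.
have H0 : forall a b, (forall P Q, nbhs a P -> nbhs b Q -> P `&` Q !=set0) -> d a b = 0.
  move=> a b H; apply/eqP; rewrite eq_le d0 andbT leNgt; apply/negP.
  move=> /(uc_pos uc) [P [Q [nP nQ PQ]]].
  have [z [Pz Qz]] := H P Q nP nQ.
  by have := PQ z z Pz Qz; rewrite dd ltxx.
apply: sep; apply: H0 => P Q nP nQ; first exact: cl.
by rewrite setIC; apply: cl.
Qed.
End Aux.


Set Implicit Arguments.

Lemma tube1 (X Y : topologicalType) (k : X) (L : set Y) (W : set (X * Y)) :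
  compact L -> open W -> (forall l, L l -> W (k, l)) ->
  exists N V, [/\ nbhs k N, (forall l, L l -> nbhs l V) & N `*` V `<=` W].
Proof.
move=> /compact_near_coveringP cov oW kLW.
have H : \forall N \near powerset_filter_from (nbhs k),
    L `<=` (fun l => exists M, nbhs l M /\ N `*` M `<=` W).
  apply: cov => l Ll; have := kLW l Ll; rewrite openE in oW => /oW.
  move=> [[P Q] /= [nP nQ] sub].
  exists (Q°, [set N | N `<=` P]) => /=.
    split; first exact: nbhs_interior.
    exact: small_set_sub.
  move=> [l' N] /= [Ql' NP]; exists Q; split => //.
  by move=> [a b] [/= Na Qb]; apply: sub; split => //=; apply: NP.
have [|N nN HN] := (@near_powerset_filter_fromP _ (nbhs k)
   (fun N => L `<=` (fun l => exists M, nbhs l M /\ N `*` M `<=` W)) _).1 H.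
  move=> A B AB HB l Ll; have [M [nM sub]] := HB l Ll; exists M; split => //.
  by move=> [a b] [/= Aa Mb]; apply: sub; split => //; apply: AB.
exists N, [set l' | exists M, nbhs l' M /\ N `*` M `<=` W]; split => //.
  move=> l Ll; have [M [nM sub]] := HN l Ll.
  apply: filterS (nbhs_interior nM) => l' Ml'; by exists M.
move=> [a b] [/= Na [M [nM sub]]]; apply: sub; split => //=.
exact: nbhs_singleton.
Qed.

Lemma tube2 (X Y : topologicalType) (K : set X) (L : set Y) (W : set (X * Y)) :
  compact K -> compact L -> L !=set0 -> open W ->
  (forall k l, K k -> L l -> W (k, l)) ->
  exists U V, [/\ (forall k, K k -> nbhs k U), (forall l, L l -> nbhs l V) & U `*` V `<=` W].
Proof.
move=> /compact_near_coveringP cov cL Lne oW KLW.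
have PL : ProperFilter (set_nbhs L) by exact: set_nbhs_pfilter.
have H : \forall V \near powerset_filter_from (set_nbhs L),
    K `<=` (fun k => exists N, nbhs k N /\ N `*` V `<=` W).
  apply: cov => k Kk.
  have [N0 [V0 [nN0 nV0 sub]]] := tube1 cL oW (KLW k ^~ Kk).
  exists (N0°, [set V | V `<=` V0]) => /=.
    split; first exact: nbhs_interior.
    by apply: small_set_sub => l Ll; exact: nV0.
  move=> [k' V] /= [Nk' VV0]; exists N0; split => //.
  by move=> [a b] [/= Na Vb]; apply: sub; split => //=; apply: VV0.
have [|V nV HV] := (@near_powerset_filter_fromP _ (set_nbhs L)
   (fun V => K `<=` (fun k => exists N, nbhs k N /\ N `*` V `<=` W)) _).1 H.
  move=> A B AB HB k Kk; have [M [nM sub]] := HB k Kk; exists M; split => //.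
  by move=> [a b] [/= Aa Mb]; apply: sub; split => //; apply: AB.
exists [set k' | exists N, nbhs k' N /\ N `*` V `<=` W], V; split => //.
- move=> k Kk; have [M [nM sub]] := HV k Kk.
  apply: filterS (nbhs_interior nM) => l' Ml'; by exists M.
move=> [a b] [/= [M [nM sub]] Vb]; apply: sub; split => //=.
exact: nbhs_singleton.
Qed.


Unset Implicit Arguments.

Section Sat.
Variables (R : realType) (X : topologicalType) (g : X -> X -> \bar R).
Hypotheses (cX : compact [set: X]) (hg : emetric g) (uc : upper_continuous g).

Definition ee (x y : X) := g x y = 0 /\ g y x = 0.

Lemma ee_refl x : ee x x.
Proof. by case: hg => _ h _; split. Qed.

Lemma ee_sym x y : ee x y -> ee y x.
Proof. by case. Qed.

Lemma ee_trans x y z : ee x y -> ee y z -> ee x z.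
Proof.
case: hg => h0 _ h2 [xy yx] [yz zy]; split; apply/eqP; rewrite eq_le h0 andbT.
  by have := h2 x y z; rewrite xy yz adde0.
by have := h2 z y x; rewrite zy yx adde0.
Qed.

Lemma ee_inv x x' y y' : ee x x' -> ee y y' -> g x y = g x' y'.
Proof.
case: hg => h0 _ h2 [xx' x'x] [yy' y'y]; apply/eqP; rewrite eq_le; apply/andP; split.
  apply: le_trans (h2 x x' y) _; rewrite xx' add0e.
  by apply: le_trans (h2 x' y' y) _; rewrite y'y adde0.
apply: le_trans (h2 x' x y') _; rewrite x'x add0e.
by apply: le_trans (h2 x y y') _; rewrite yy' adde0.
Qed.

Lemma pos_of_not0 a b : g a b <> 0 -> 0 < g a b.
Proof.
case: hg => h0 _ _ H; rewrite lt_def h0 andbT; apply/eqP => E; exact: H.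
Qed.

Lemma sat_open (U : set X) : open U -> open [set z | forall z', ee z z' -> U z'].
Proof.
move=> oU; rewrite openE => z Az; apply: contrapT => nA.
pose F := filter_from (nbhs z) (fun N => [set w | ~ U w /\ exists n, N n /\ ee n w]).
have FF : ProperFilter F.
  apply: filter_from_proper.
    apply: filter_from_filter; first by exists setT; exact: filterT.
    move=> N1 N2 n1 n2; exists (N1 `&` N2); first exact: filterI.
    by move=> w [nU [n [[N1n N2n] enw]]]; split; split => //; exists n.
  move=> N nN; have : ~ (N `<=` [set z | forall z', ee z z' -> U z']).
    by move=> NA; apply: nA; exact: filterS NA nN.
  move=> /existsNP [n /not_implyP [Nn /existsNP [w /not_implyP [enw nUw]]]].
  by exists w; split => //; exists n.
have FT : F setT by exists setT => //; exact: filterT.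
have [c [_ clc]] := cX F FF FT.
have nUc : ~ U c.
  move=> Uc; have nUc : nbhs c U by rewrite openE in oU; exact: oU.
  have FB : F [set w | ~ U w /\ exists n, setT n /\ ee n w] by exists setT => //; exact: filterT.
  by have [w [[nUw _] Uw]] := clc _ _ FB nUc.
apply: nUc; apply: Az; split.
  apply: contrapT => /pos_of_not0 /(uc_pos uc) [P [Q [nP nQ PQ]]].
  have FB : F [set w | ~ U w /\ exists n, P n /\ ee n w] by exists P.
  have [w [[_ [n [Pn [enw _]]]] Qw]] := clc _ _ FB nQ.
  by have := PQ n w Pn Qw; rewrite enw ltxx.
apply: contrapT => /pos_of_not0 /(uc_pos uc) [Q [P [nQ nP PQ]]].
have FB : F [set w | ~ U w /\ exists n, P n /\ ee n w] by exists P.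
have [w [[_ [n [Pn [_ ewn]]]] Qw]] := clc _ _ FB nQ.
by have := PQ w n Qw Pn; rewrite ewn ltxx.
Qed.

Lemma class_closed x : closed [set z | ee x z].
Proof.
rewrite -[X in closed X]setCK; apply: open_closedC; rewrite openE => z nxz.
have [xz|zx] : g x z <> 0 \/ g z x <> 0.
  by apply: contrapT => /not_orP [/contrapT ? /contrapT ?]; apply: nxz.
- have [P [Q [nP nQ PQ]]] := uc_pos uc (pos_of_not0 _ _ xz).
  apply: filterS nQ => w Qw [xw _].
  by have := PQ x w (nbhs_singleton nP) Qw; rewrite xw ltxx.
- have [Q [P [nQ nP PQ]]] := uc_pos uc (pos_of_not0 _ _ zx).
  apply: filterS nQ => w Qw [_ wx].
  by have := PQ w x Qw (nbhs_singleton nP); rewrite wx ltxx.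
Qed.

Lemma class_compact x : compact [set z | ee x z].
Proof. by apply: (subclosed_compact (class_closed x) cX). Qed.

Lemma key_sep x y (u : \bar R) : 0 <= u -> u < g x y ->
  exists A B, [/\ open A, open B, A x & B y] /\ [/\
    (forall a a', A a -> ee a a' -> A a'),
    (forall b b', B b -> ee b b' -> B b') &
    (forall a b, A a -> B b -> u < g a b)].
Proof.
move=> u0 uxy.
have oW := uc u u0.
have KLW : forall k l, ee x k -> ee y l -> [set p | u < g p.1 p.2] (k, l).
  by move=> k l xk yl /=; rewrite -(ee_inv _ _ _ _ xk yl).
have [U [V [nU nV UVW]]] := tube2 (class_compact x) (class_compact y)
   (ex_intro _ y (ee_refl y)) oW KLW.
pose A := [set z | forall z', ee z z' -> U° z'].
pose B := [set z | forall z', ee z z' -> V° z'].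
exists A, B; split; first split.
- exact: sat_open (@open_interior _ U).
- exact: sat_open (@open_interior _ V).
- by move=> z' xz'; exact: nU.
- by move=> z' yz'; exact: nV.
split.
- by move=> a a' Aa aa' z' a'z'; apply: Aa; exact: ee_trans aa' a'z'.
- by move=> a a' Aa aa' z' a'z'; apply: Aa; exact: ee_trans aa' a'z'.
move=> a b Aa Bb; apply: (UVW (a, b)); split => /=.
  exact: nbhs_singleton (Aa a (ee_refl a)).
exact: nbhs_singleton (Bb b (ee_refl b)).
Qed.
End Sat.
Arguments ee {R X} g x y.
Arguments ee_refl {R X g} hg x.
Arguments ee_sym {R X g} x y.
Arguments ee_trans {R X g} hg x y z.
Arguments ee_inv {R X g} hg x x' y y'.
Arguments pos_of_not0 {R X g} hg a b.
Arguments sat_open {R X g} cX hg uc U.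
Arguments class_closed {R X g} hg uc x.
Arguments class_compact {R X g} cX hg uc x.
Arguments key_sep {R X g} cX hg uc x y u.


Unset Implicit Arguments.

Section Quot.
Variables (R : realType) (X : topologicalType) (g : X -> X -> \bar R) (he : emetric g).

Lemma pi_eqP x y : quot_proj he x = quot_proj he y <-> ee g x y.
Proof.
rewrite /quot_proj; split.
  by move/eqquotP => /asboolP.
by move=> H; apply/eqquotP; apply/asboolP.
Qed.

Lemma pi_repr a : quot_proj he (repr a) = a.
Proof. exact: reprK. Qed.

Lemma repr_pi x : ee g (repr (quot_proj he x)) x.
Proof. by apply/pi_eqP; rewrite pi_repr. Qed.

Lemma qm_pi x y : quot_metric he (quot_proj he x) (quot_proj he y) = g x y.
Proof. by rewrite /quot_metric; apply: ee_inv => //; apply: repr_pi. Qed.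


Lemma qm_emetric : emetric (quot_metric he).
Proof.
by case: he => h0 h1 h2; split => *; rewrite /quot_metric.
Qed.

Lemma qm_sep : Defs.separated (quot_metric he).
Proof.
move=> a b H1 H2; rewrite -(pi_repr a) -(pi_repr b); apply/pi_eqP; split.
  exact: H1.
exact: H2.
Qed.

Lemma qpi_cont : continuous (quot_proj he).
Proof. exact: pi_continuous. Qed.

Lemma open_sat (A : set X) : open A -> (forall a a', A a -> ee g a a' -> A a') ->
  open ([set a : quot_space he | A (repr a)]).
Proof.
move=> oA sA; rewrite /open /= /quotient_open.
rewrite (_ : _ @^-1` _ = A) //; rewrite eqEsubset; split => z /=.
  by move=> H; apply: sA H _; apply: repr_pi.
by move=> Az; apply: sA Az _; apply: ee_sym; apply: repr_pi.
Qed.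

Lemma qm_uc : compact [set: X] -> upper_continuous g ->
  upper_continuous (quot_metric he).
Proof.
move=> cX uc u u0; rewrite openE => -[a b] /= H.
have [A [B [[oA oB Aa Bb] [sA sB AB]]]] := key_sep cX he uc _ _ u u0 H.
exists ([set a | A (repr a)], [set b | B (repr b)]); first split => /=.
- apply: (@open_nbhs_nbhs (quot_space he)); split => //; exact: open_sat.
- apply: (@open_nbhs_nbhs (quot_space he)); split => //; exact: open_sat.
by move=> [a' b'] [/= Aa' Bb']; apply: AB.
Qed.

Lemma q_compact : compact [set: X] -> compact [set: quot_space he].
Proof.
move=> cX; have := continuous_compact (continuous_subspaceT qpi_cont) cX.
rewrite (_ : [set quot_proj he x | x in [set: X]] = [set: quot_space he]) //.
rewrite eqEsubset; split => // a _; exists (repr a) => //; exact: pi_repr.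
Qed.

End Quot.
Arguments pi_eqP {R X g} he x y.
Arguments pi_repr {R X g} he a.
Arguments repr_pi {R X g} he x.
Arguments qm_pi {R X g} he x y.
Arguments qm_emetric {R X g} he.
Arguments qm_sep {R X g} he.
Arguments qpi_cont {R X g} he.
Arguments open_sat {R X g} he A.
Arguments qm_uc {R X g} he.
Arguments q_compact {R X g} he.


Unset Implicit Arguments.

Section Main.
Variable R : realType.

Lemma kernel_uc (X Y : topologicalType) (dY : Y -> Y -> \bar R) (f : X -> Y) :
  continuous f -> upper_continuous dY -> upper_continuous (kernel_metric dY f).
Proof.
move=> cf uc u u0; rewrite openE => -[a b] /= H.
have := uc u u0; rewrite openE => /(_ (f a, f b) H) [[P Q] /= [nP nQ] sub].
exists (f @^-1` P, f @^-1` Q); first split.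
- exact: (cf a _ nP).
- exact: (cf b _ nQ).
by move=> [a' b'] [/= Pa Qb]; apply: (sub (f a', f b')).
Qed.

Lemma factor (X : topologicalType) (g : X -> X -> \bar R) (he : emetric g)
  (Y : topologicalType) (dY : Y -> Y -> \bar R) (f : X -> Y) :
  emetric dY -> Defs.separated dY -> continuous f ->
  (forall x y, dY (f x) (f y) <= g x y) ->
  quot_le (quot_metric he) dY (quot_proj he) f.
Proof.
move=> [h0 _ _] sepY cf H.
have homo : forall a b, quot_proj he a = quot_proj he b -> f a = f b.
  move=> a b /pi_eqP [ab ba]; apply: sepY; apply/eqP; rewrite eq_le h0 andbT.
    by rewrite -ab; exact: H.
  by rewrite -ba; exact: H.
exists (f \o repr); split; first split.
- apply: repr_comp_continuous => // a b /eqP E; apply/eqP; exact: homo.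
- by move=> a b /=; exact: H.
apply: funext => x /=; apply: homo; exact: pi_repr.
Qed.

End Main.

Theorem theorem3p8 (R : realType) (X : topologicalType)
    (dX : X -> X -> \bar R) (hX : metCH_sep dX) :
  (forall (Y : topologicalType) (dY : Y -> Y -> \bar R) (f : X -> Y),
      is_quot dX dY f -> is_subm dX (kernel_metric dY f)) /\
  (forall (g : X -> X -> \bar R) (hg : is_subm dX g),
      is_quot dX (quot_metric (sm_metric hg)) (quot_proj (sm_metric hg))) /\
  (forall (Y Z : topologicalType) (dY : Y -> Y -> \bar R)
          (dZ : Z -> Z -> \bar R) (f : X -> Y) (f' : X -> Z),
      is_quot dX dY f -> is_quot dX dZ f' -> quot_le dY dZ f f' ->
      subm_le (kernel_metric dZ f') (kernel_metric dY f)) /\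
  (forall (g1 g2 : X -> X -> \bar R) (hg1 : is_subm dX g1) (hg2 : is_subm dX g2),
      subm_le g1 g2 ->
      quot_le (quot_metric (sm_metric hg2)) (quot_metric (sm_metric hg1))
              (quot_proj (sm_metric hg2)) (quot_proj (sm_metric hg1))) /\
  (forall (Y : topologicalType) (dY : Y -> Y -> \bar R) (f : X -> Y)
          (g : X -> X -> \bar R),
      is_quot dX dY f -> forall hg : is_subm dX g,
      subm_le (kernel_metric dY f) g <->
      quot_le (quot_metric (sm_metric hg)) dY (quot_proj (sm_metric hg)) f) /\
  (forall (g : X -> X -> \bar R) (hg : is_subm dX g),
      kernel_metric (quot_metric (sm_metric hg)) (quot_proj (sm_metric hg)) = g) /\
  (forall (Y : topologicalType) (dY : Y -> Y -> \bar R) (f : X -> Y)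
          (hf : is_quot dX dY f),
      let hk := kernel_emetric f (mc_metric (q_space hf)) in
      quot_le (quot_metric hk) dY (quot_proj hk) f /\
      quot_le dY (quot_metric hk) f (quot_proj hk)).
Proof.
have cX := mc_compact hX.
split.
  move=> Y dY f [hY [cf nf] _]; split.
  - exact: kernel_emetric f (mc_metric hY).
  - exact: kernel_uc cf (mc_cont hY).
  - exact: nf.
split.
  move=> g hg; set he := sm_metric hg; split.
  - split.
    + exact: q_compact.
    + exact: (hausdorff_of (qm_emetric he) (qm_sep he) (qm_uc he cX (sm_cont hg))).
    + exact: qm_emetric.
    + exact: qm_sep.
    + exact: (qm_uc he cX (sm_cont hg)).
  - split; first exact: qpi_cont.
    by move=> x y; rewrite qm_pi; exact: sm_le.
  - by move=> a; exists (repr a); exact: pi_repr.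
split.
  move=> Y Z dY dZ f f' _ _ [h [[_ hne] hf]] x y.
  by rewrite /kernel_metric -hf /=; exact: hne.
split.
  move=> g1 g2 hg1 hg2 le12.
  apply: factor.
  - exact: qm_emetric.
  - exact: qm_sep.
  - exact: qpi_cont.
  by move=> x y; rewrite qm_pi; exact: le12.
split.
  move=> Y dY f g [hY [cf nf] _] hg; split.
    move=> le; apply: factor => //.
    - exact: mc_metric hY.
    - exact: mc_separated hY.
  move=> [h [[_ hne] hf]] x y.
  rewrite /kernel_metric -hf /=; apply: le_trans (hne _ _) _.
  by rewrite qm_pi.
split.
  move=> g hg; apply: funext => x; apply: funext => y.
  by rewrite /kernel_metric qm_pi.
move=> Y dY f hf hk; split.
  apply: factor => //.
  - exact: mc_metric (q_space hf).
  - exact: mc_separated (q_space hf).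
  - exact: (proj1 (q_morphism hf)).
case: hf hk => hY [cf nf] surj hk.
pose s y := sval (cid (surj y)).
have fs : forall y, f (s y) = y by move=> y; exact: (svalP (cid (surj y))).
pose h y := quot_proj hk (s y).
have hf' : forall x, h (f x) = quot_proj hk x.
  move=> x; apply/(pi_eqP hk); rewrite /ee /kernel_metric fs.
  by case: (mc_metric hY) => _ dd _; split; exact: dd.
exists h; split; first split.
- apply/continuousP => A oA.
  have -> : h @^-1` A = ~` (f @` (quot_proj hk @^-1` (~` A))).
    rewrite eqEsubset; split => y /=.
      by move=> hyA [x nA fxy]; apply: nA; rewrite -hf' fxy.
    by move=> H; apply: contrapT => nhA; apply: H; exists (s y).
  apply: closed_openC; apply: compact_closed (mc_hausdorff hY) _.
  apply: continuous_compact; first exact: continuous_subspaceT cf.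
  apply: (subclosed_compact _ cX) => //.
  apply: preimage_closed => [x _|]; [exact: qpi_cont | exact: open_closedC].
- by move=> a b; rewrite /h qm_pi /kernel_metric !fs.
by apply: funext => x; exact: hf'.
Qed.
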